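(* Let $a<b$ and $c<d$ be real numbers, and let $f:[a,b]\times[c,d]\to\mathbb{R}$ be a continuous function whose first partial derivatives $D_1 f, D_2 f$ and mixed second partial derivative $D_2D_1 f$ exist and are continuous on $[a,b]\times[c,d]$. Then \begin{align*} &\int_a^b\int_c^d f(t,s)\,ds\,dt-\frac12\Big[(d-c)\int_a^b\big[f(t,c)+f(t,d)\big]\,dt+(b-a)\int_c^d\big[f(a,s)+f(b,s)\big]\,ds\Big]\\ &\quad+\frac14(b-a)(d-c)\big[f(a,c)+f(a,d)+f(b,c)+f(b,d)\big] \le \frac14(b-a)(d-c)\int_a^b\int_c^d |D_2D_1 f(t,s)|\,ds\,dt . \end{align*}
   Context: $D_1$ and $D_2$ denote partial differentiation with respect to the first and second variable respectively, so $D_2D_1 f=\frac{\partial}{\partial s}\frac{\partial f}{\partial t}$. *)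

(* Defs.v *)
From Stdlib Require Import Reals.
From Coquelicot Require Import Coquelicot.
Open Scope R_scope.

Definition in_rect (a b c d : R) (p : R * R) : Prop :=
  a <= fst p <= b /\ c <= snd p <= d.

Definition cont_on_rect (a b c d : R) (g : R -> R -> R) : Prop :=
  forall t s, in_rect a b c d (t, s) ->
    filterlim (fun p : R * R => g (fst p) (snd p))
      (within (in_rect a b c d) (locally (t, s))) (locally (g t s)).

(* h has derivative l at x relative to the closed interval [lo,hi]
   (one-sided at the endpoints): the difference quotient tends to l as
   y -> x with y <> x, y in [lo,hi]. *)
Definition deriv_within (lo hi : R) (h : R -> R) (x l : R) : Prop :=
  filterlim (fun y => (h y - h x) / (y - x))
    (within (fun y => y <> x /\ lo <= y <= hi) (locally x)) (locally l).

(* Main.v *)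
Require Import Defs.
From Stdlib Require Import Reals Lra.
From Coquelicot Require Import Coquelicot.
Open Scope R_scope.

Definition clamp (lo hi x : R) := Rmax lo (Rmin hi x).

Lemma clamp_id lo hi x : lo <= x <= hi -> clamp lo hi x = x.
Proof. intros H; unfold clamp, Rmax, Rmin; repeat destruct Rle_dec; lra. Qed.

Lemma clamp_in lo hi x : lo <= hi -> lo <= clamp lo hi x <= hi.
Proof. intros H; unfold clamp, Rmax, Rmin; repeat destruct Rle_dec; lra. Qed.

Lemma clamp_lip lo hi x y : lo <= hi -> Rabs (clamp lo hi x - clamp lo hi y) <= Rabs (x - y).
Proof. intros H; unfold clamp, Rmax, Rmin; repeat destruct Rle_dec; unfold Rabs; repeat destruct Rcase_abs; lra. Qed.

Definition C1 lo hi h := forall x, continuity_pt (fun y => h (clamp lo hi y)) x.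

Lemma C1_of_eps lo hi h : lo <= hi ->
  (forall x, lo <= x <= hi -> forall eps, 0 < eps -> exists del, 0 < del /\
     forall y, lo <= y <= hi -> Rabs (y - x) < del -> Rabs (h y - h x) < eps) ->
  C1 lo hi h.
Proof.
  intros Hlh H x eps Heps.
  destruct (H (clamp lo hi x) (clamp_in lo hi x Hlh) eps Heps) as [del [Hdel Hd]].
  exists del; split; auto.
  intros y [_ Hy]. simpl in *. unfold R_dist in *.
  apply Hd. apply clamp_in; auto.
  eapply Rle_lt_trans. apply clamp_lip; auto. auto.
Qed.

Lemma C1_ext lo hi h1 h2 : lo <= hi -> (forall x, lo <= x <= hi -> h1 x = h2 x) -> C1 lo hi h1 -> C1 lo hi h2.
Proof.
  intros Hl He H x. eapply continuity_pt_ext. 2: apply (H x).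
  intros y; simpl; apply He, clamp_in; auto.
Qed.

Lemma C1_ex_RInt lo hi h : lo <= hi -> C1 lo hi h -> ex_RInt h lo hi.
Proof.
  intros Hl H.
  apply ex_RInt_ext with (fun y => h (clamp lo hi y)).
  intros x Hx; rewrite Rmin_left, Rmax_right in Hx by lra; rewrite clamp_id; auto; lra.
  apply (@ex_RInt_continuous R_CompleteNormedModule); intros; apply continuity_pt_filterlim; apply H.
Qed.

Lemma C1_plus lo hi f g : C1 lo hi f -> C1 lo hi g -> C1 lo hi (fun x => f x + g x).
Proof. intros Hf Hg x. apply (continuity_pt_plus (fun y => f (clamp lo hi y)) (fun y => g (clamp lo hi y))); auto. Qed.
Lemma C1_minus lo hi f g : C1 lo hi f -> C1 lo hi g -> C1 lo hi (fun x => f x - g x).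
Proof. intros Hf Hg x. apply (continuity_pt_minus (fun y => f (clamp lo hi y)) (fun y => g (clamp lo hi y))); auto. Qed.
Lemma C1_mult lo hi f g : C1 lo hi f -> C1 lo hi g -> C1 lo hi (fun x => f x * g x).
Proof. intros Hf Hg x. apply (continuity_pt_mult (fun y => f (clamp lo hi y)) (fun y => g (clamp lo hi y))); auto. Qed.
Lemma C1_const lo hi k : C1 lo hi (fun _ => k).
Proof. intros x. apply continuity_pt_const. intros u v; auto. Qed.
Lemma C1_opp lo hi f : C1 lo hi f -> C1 lo hi (fun x => - f x).
Proof. intros Hf x. apply (continuity_pt_opp (fun y => f (clamp lo hi y))); auto. Qed.
Lemma C1_abs lo hi f : C1 lo hi f -> C1 lo hi (fun x => Rabs (f x)).
Proof. intros Hf x. apply (continuity_pt_comp (fun y => f (clamp lo hi y)) Rabs); auto. apply Rcontinuity_abs. Qed.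
Lemma C1_id lo hi : lo <= hi -> C1 lo hi (fun x => x).
Proof.
  intros Hl. apply C1_of_eps; auto. intros x Hx eps Heps. exists eps; split; auto.
Qed.
Lemma rect_eps a b c d g : cont_on_rect a b c d g -> forall t s, in_rect a b c d (t, s) ->
  forall eps, 0 < eps -> exists del, 0 < del /\ forall t' s', in_rect a b c d (t', s') ->
  Rabs (t' - t) < del -> Rabs (s' - s) < del -> Rabs (g t' s' - g t s) < eps.
Proof.
  intros H t s Hin eps Heps.
  destruct (H t s Hin (ball (g t s) eps) (locally_ball _ (mkposreal eps Heps))) as [del Hd].
  exists del; split. apply cond_pos.
  intros t' s' Hin' H1 H2.
  apply (Hd (t', s')); auto. split; simpl; auto.
Qed.

Lemma dw_derive lo hi h x l : lo < x < hi -> deriv_within lo hi h x l -> is_derive h x l.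
Proof.
  intros Hx H. apply is_derive_Reals. intros eps Heps.
  destruct (H (ball l eps) (locally_ball _ (mkposreal eps Heps))) as [del Hd].
  assert (Hp : 0 < Rmin del (Rmin (x - lo) (hi - x))).
  { apply Rmin_pos. apply cond_pos. apply Rmin_pos; lra. }
  exists (mkposreal _ Hp). intros h0 Hh0 Hlt. simpl in Hlt.
  assert (Hm1 := Rmin_l del (Rmin (x - lo) (hi - x))).
  assert (Hm2 := Rmin_r del (Rmin (x - lo) (hi - x))).
  assert (Hm3 := Rmin_l (x - lo) (hi - x)).
  assert (Hm4 := Rmin_r (x - lo) (hi - x)).
  assert (Hb : Rabs h0 < del) by lra.
  assert (Hy := Hd (x + h0)).
  replace (x + h0 - x) with h0 in Hy by ring.
  apply Hy.
  - change (Rabs (x + h0 - x) < del). replace (x + h0 - x) with h0 by ring. auto.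
  - split. intro; apply Hh0; lra.
    unfold Rabs in Hlt; destruct Rcase_abs in Hlt; lra.
Qed.

Definition UC a b c d (g : R -> R -> R) := forall eps, 0 < eps -> exists del, 0 < del /\
  forall x y u v, a <= x <= b -> c <= y <= d -> a <= u <= b -> c <= v <= d ->
  Rabs (u - x) < del -> Rabs (v - y) < del -> Rabs (g u v - g x y) < eps.

Lemma UC_of_cont a b c d g : a <= b -> c <= d -> cont_on_rect a b c d g -> UC a b c d g.
Proof.
  intros Hab Hcd H.
  set (G := fun t s => g (clamp a b t) (clamp c d s)).
  assert (HG : forall x y, continuity_2d_pt G x y).
  { intros x y eps.
    assert (Hin : in_rect a b c d (clamp a b x, clamp c d y)).
    { split; simpl; apply clamp_in; auto. }
    destruct (rect_eps a b c d g H _ _ Hin eps (cond_pos eps)) as [del [Hdel Hd]].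
    exists (mkposreal del Hdel). intros u v Hu Hv. simpl in Hu, Hv. unfold G.
    apply Hd. split; simpl; apply clamp_in; auto.
    eapply Rle_lt_trans. apply clamp_lip; auto. auto.
    eapply Rle_lt_trans. apply clamp_lip; auto. auto. }
  intros eps Heps.
  destruct (uniform_continuity_2d G a b c d (fun x y _ _ => HG x y) (mkposreal eps Heps)) as [del Hd].
  exists del; split. apply cond_pos.
  intros x y u v Hx Hy Hu Hv H1 H2.
  specialize (Hd x y u v Hx Hy Hu Hv H1 H2). unfold G in Hd.
  rewrite !clamp_id in Hd; auto.
Qed.

Lemma UC_sec_s a b c d g t : c <= d -> UC a b c d g -> a <= t <= b -> C1 c d (g t).
Proof.
  intros Hcd H Ht. apply C1_of_eps; auto. intros x Hx eps Heps.
  destruct (H eps Heps) as [del [Hdel Hd]]. exists del; split; auto.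
  intros y Hy Hyx. apply Hd; auto. rewrite Rminus_diag, Rabs_R0; auto.
Qed.

Lemma UC_sec_t a b c d g s : a <= b -> UC a b c d g -> c <= s <= d -> C1 a b (fun t => g t s).
Proof.
  intros Hab H Hs. apply C1_of_eps; auto. intros x Hx eps Heps.
  destruct (H eps Heps) as [del [Hdel Hd]]. exists del; split; auto.
  intros y Hy Hyx. apply Hd; auto. rewrite Rminus_diag, Rabs_R0; auto.
Qed.

Lemma UC_abs a b c d g : UC a b c d g -> UC a b c d (fun t s => Rabs (g t s)).
Proof.
  intros H eps Heps. destruct (H eps Heps) as [del [Hdel Hd]]. exists del; split; auto.
  intros. eapply Rle_lt_trans. apply Rabs_triang_inv2. apply Hd; auto.
Qed.

Lemma UC_param a b c d g : a <= b -> c < d -> UC a b c d g -> C1 a b (fun t => RInt (g t) c d).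
Proof.
  intros Hab Hcd H. apply C1_of_eps; auto. intros x Hx eps Heps.
  assert (He : 0 < eps / (d - c + 1)) by (apply Rdiv_lt_0_compat; lra).
  destruct (H _ He) as [del [Hdel Hd]]. exists del; split; auto.
  intros y Hy Hyx.
  assert (Ey : ex_RInt (g y) c d) by (apply C1_ex_RInt; [lra| apply (UC_sec_s a b); auto; lra]).
  assert (Ex : ex_RInt (g x) c d) by (apply C1_ex_RInt; [lra| apply (UC_sec_s a b); auto; lra]).
  assert (E : RInt (fun s => g y s - g x s) c d = RInt (g y) c d - RInt (g x) c d).
  { exact (RInt_minus _ _ _ _ Ey Ex). }
  rewrite <- E.
  eapply Rle_lt_trans. apply abs_RInt_le_const with (M := eps / (d - c + 1)). lra.
  exact (ex_RInt_minus _ _ _ _ Ey Ex).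
  intros s Hs. left. apply Hd; auto. rewrite Rminus_diag, Rabs_R0; auto.
  apply Rlt_le_trans with ((d - c + 1) * (eps / (d - c + 1))).
  apply Rmult_lt_compat_r; lra. right; field; lra.
Qed.

Lemma FTC_w lo hi P k : lo < hi -> C1 lo hi P -> C1 lo hi k ->
  (forall x, lo < x < hi -> is_derive P x (k x)) -> is_RInt k lo hi (P hi - P lo).
Proof.
  intros Hl HP Hk HD.
  set (K := fun y => k (clamp lo hi y)).
  assert (Kc : forall x, continuous K x) by (intros; apply continuity_pt_filterlim, Hk).
  assert (Kex : forall x y, ex_RInt K x y)
    by (intros; apply (@ex_RInt_continuous R_CompleteNormedModule); intros; apply Kc).
  set (IK := fun x => RInt K lo x).
  assert (IKd : forall x, is_derive IK x (K x)).
  { intros x. apply (is_derive_RInt K IK lo x). 2: apply Kc.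
    exists (mkposreal 1 Rlt_0_1). intros y _. exact (RInt_correct K lo y (Kex lo y)). }
  set (Q := fun x => IK x - P (clamp lo hi x)).
  destruct (MVT_gen Q lo hi (fun _ => 0)) as [z [_ Hz]].
  - rewrite Rmin_left, Rmax_right by lra. intros x Hx.
    assert (H1 : is_derive (fun y => P (clamp lo hi y)) x (k x)).
    { apply is_derive_ext_loc with P. 2: apply HD; auto.
      assert (Hp : 0 < Rmin (x - lo) (hi - x)) by (apply Rmin_pos; lra).
      exists (mkposreal _ Hp). intros y Hy. simpl in Hy.
      change (Rabs (y - x) < Rmin (x - lo) (hi - x)) in Hy.
      assert (Hm3 := Rmin_l (x - lo) (hi - x)).
      assert (Hm4 := Rmin_r (x - lo) (hi - x)).
      rewrite clamp_id; auto. unfold Rabs in Hy; destruct Rcase_abs in Hy; lra. }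
    assert (H2 := is_derive_minus _ _ x _ _ (IKd x) H1).
    unfold K in H2. rewrite clamp_id in H2 by lra.
    replace 0 with (minus (k x) (k x)). exact H2.
    unfold minus, plus, opp; simpl; ring.
  - intros x _. apply continuity_pt_minus.
    apply continuity_pt_filterlim. exact (ex_derive_continuous (V:=R_NormedModule) IK x (ex_intro _ (K x) (IKd x))).
    apply HP.
  - unfold Q, IK in Hz. rewrite Rmult_0_l, RInt_point in Hz.
    rewrite !clamp_id in Hz by lra.
    apply is_RInt_ext with K.
    intros x Hx; rewrite Rmin_left, Rmax_right in Hx by lra; unfold K; rewrite clamp_id; auto; lra.
    replace (P hi - P lo) with (RInt K lo hi). exact (RInt_correct K lo hi (Kex lo hi)).
    revert Hz. unfold zero; simpl. lra.
Qed.

Lemma trap lo hi h h' : lo < hi -> C1 lo hi h -> C1 lo hi h' ->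
  (forall x, lo < x < hi -> is_derive h x (h' x)) ->
  is_RInt (fun x => (x - (lo + hi) / 2) * h' x) lo hi
    ((hi - lo) / 2 * (h lo + h hi) - RInt h lo hi).
Proof.
  intros Hl Hh Hh' HD.
  set (m := (lo + hi) / 2).
  assert (Cm : C1 lo hi (fun x => x - m)) by (apply C1_minus; [apply C1_id; lra | apply C1_const]).
  assert (HDP : forall x, lo < x < hi -> is_derive (fun x => (x - m) * h x) x (h x + (x - m) * h' x)).
  { intros x Hx. specialize (HD x Hx).
    apply is_derive_Reals in HD. apply is_derive_Reals.
    assert (Hid : derivable_pt_lim (fun x => x - m) x 1).
    { replace 1 with (1 - 0) by ring. apply derivable_pt_lim_minus. apply derivable_pt_lim_id. apply derivable_pt_lim_const. }
    assert (Hm := derivable_pt_lim_mult _ _ x _ _ Hid HD).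
    replace (h x + (x - m) * h' x) with (1 * h x + (x - m) * h' x) by ring. exact Hm. }
  assert (H1 := FTC_w lo hi (fun x => (x - m) * h x) (fun x => h x + (x - m) * h' x) Hl
     (C1_mult _ _ _ _ Cm Hh) (C1_plus _ _ _ _ Hh (C1_mult _ _ _ _ Cm Hh')) HDP).
  assert (H2 : is_RInt h lo hi (RInt h lo hi)) by (exact (RInt_correct h lo hi (C1_ex_RInt lo hi h ltac:(lra) Hh))).
  assert (H3 := is_RInt_minus _ _ _ _ _ _ H1 H2).
  replace ((hi - lo) / 2 * (h lo + h hi) - RInt h lo hi) with
    (minus ((hi - m) * h hi - (lo - m) * h lo) (RInt h lo hi)).
  eapply is_RInt_ext. 2: exact H3.
  intros x _; unfold minus, plus, opp; simpl; ring.
  unfold minus, plus, opp, m; simpl; field.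
Qed.

Lemma deriv_param a b c d f D1f : a < b -> c < d ->
  (forall t s, in_rect a b c d (t, s) -> deriv_within a b (fun u => f u s) t (D1f t s)) ->
  UC a b c d f -> UC a b c d D1f -> forall t, a < t < b ->
  is_derive (fun t => RInt (fun s => f t s) c d) t (RInt (fun s => D1f t s) c d).
Proof.
  intros Hab Hcd H1 Uf UD t Ht.
  apply is_derive_Reals; intros eps Heps.
  assert (He : 0 < eps / (d - c + 1)) by (apply Rdiv_lt_0_compat; lra).
  destruct (UD _ He) as [del [Hdel Hd]].
  assert (Hp : 0 < Rmin del (Rmin (t - a) (b - t))).
  { apply Rmin_pos. auto. apply Rmin_pos; lra. }
  exists (mkposreal _ Hp). intros h Hh0 Hlt. simpl in Hlt.
  assert (Hm1 := Rmin_l del (Rmin (t - a) (b - t))).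
  assert (Hm2 := Rmin_r del (Rmin (t - a) (b - t))).
  assert (Hm3 := Rmin_l (t - a) (b - t)).
  assert (Hm4 := Rmin_r (t - a) (b - t)).
  assert (Hhb : - (t - a) < h < b - t) by (unfold Rabs in Hlt; destruct Rcase_abs in Hlt; lra).
  assert (Ex1 : ex_RInt (f (t + h)) c d) by (apply C1_ex_RInt; [lra | apply (UC_sec_s a b); auto; lra]).
  assert (Ex0 : ex_RInt (f t) c d) by (apply C1_ex_RInt; [lra | apply (UC_sec_s a b); auto; lra]).
  assert (ExD : ex_RInt (D1f t) c d) by (apply C1_ex_RInt; [lra | apply (UC_sec_s a b); auto; lra]).
  assert (I1 := is_RInt_minus _ _ _ _ _ _ (RInt_correct _ _ _ Ex1) (RInt_correct _ _ _ Ex0)).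
  assert (I2 := is_RInt_scal _ _ _ (/ h) _ I1).
  assert (I3 := is_RInt_minus _ _ _ _ _ _ I2 (RInt_correct _ _ _ ExD)).
  assert (H4 : is_RInt (fun s => (f (t + h) s - f t s) / h - D1f t s) c d
     ((RInt (f (t + h)) c d - RInt (f t) c d) / h - RInt (D1f t) c d)).
  { replace ((RInt (f (t + h)) c d - RInt (f t) c d) / h - RInt (D1f t) c d) with
      (minus (scal (/ h) (minus (RInt (f (t + h)) c d) (RInt (f t) c d))) (RInt (D1f t) c d)).
    eapply is_RInt_ext. 2: exact I3.
    intros x _. unfold minus, plus, opp, scal; simpl. unfold mult; simpl. field; auto.
    unfold minus, plus, opp, scal; simpl. unfold mult; simpl. field; auto. }
  replace (t + h - t) with h by ring. change (Rabs ((RInt (f (t + h)) c d - RInt (f t) c d) / h - RInt (D1f t) c d) < eps).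
  assert (E4 := is_RInt_unique _ _ _ _ H4). simpl in E4. rewrite <- E4.
  eapply Rle_lt_trans. apply abs_RInt_le_const with (M := eps / (d - c + 1)). lra.
  eexists; exact H4.
  - intros s Hs.
    assert (Hmin : a < Rmin t (t + h)) by (unfold Rmin; destruct Rle_dec; lra).
    assert (Hmax : Rmax t (t + h) < b) by (unfold Rmax; destruct Rle_dec; lra).
    assert (Hder : forall x, a < x < b -> is_derive (fun u => f u s) x (D1f x s)).
    { intros x Hx. apply (dw_derive a b); auto. apply H1. split; simpl; lra. }
    destruct (MVT_gen (fun u => f u s) t (t + h) (fun u => D1f u s)) as [z [Hz Hfz]].
    + intros x Hx. apply Hder. lra.
    + intros x Hx. apply continuity_pt_filterlim.
      exact (ex_derive_continuous (V:=R_NormedModule) (fun u => f u s) x (ex_intro _ _ (Hder x ltac:(lra)))).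
    + replace (t + h - t) with h in Hfz by ring.
      rewrite Hfz. replace (D1f z s * h / h) with (D1f z s) by (field; auto).
      left. apply Hd; [lra|lra|lra|lra| |rewrite Rminus_diag, Rabs_R0; auto].
      assert (Hz' : Rabs (z - t) <= Rabs h).
      { revert Hz; unfold Rmin, Rmax; destruct Rle_dec; unfold Rabs; repeat destruct Rcase_abs; lra. }
      lra.
  - apply Rlt_le_trans with ((d - c + 1) * (eps / (d - c + 1))).
    apply Rmult_lt_compat_r; lra. right; field; lra.
Qed.

Lemma RInt_cmul k g lo hi : ex_RInt g lo hi -> RInt (fun x => k * g x) lo hi = k * RInt g lo hi.
Proof. intros H. exact (RInt_scal g lo hi k H). Qed.
Lemma RInt_add2 g1 g2 lo hi : ex_RInt g1 lo hi -> ex_RInt g2 lo hi ->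
  RInt (fun x => g1 x + g2 x) lo hi = RInt g1 lo hi + RInt g2 lo hi.
Proof. intros H1 H2. exact (RInt_plus g1 g2 lo hi H1 H2). Qed.
Lemma RInt_sub2 g1 g2 lo hi : ex_RInt g1 lo hi -> ex_RInt g2 lo hi ->
  RInt (fun x => g1 x - g2 x) lo hi = RInt g1 lo hi - RInt g2 lo hi.
Proof. intros H1 H2. exact (RInt_minus g1 g2 lo hi H1 H2). Qed.

Theorem corollary3p1 (a b c d : R) (f D1f D2f D21f : R -> R -> R) :
  a < b -> c < d ->
  cont_on_rect a b c d f ->
  (forall t s, in_rect a b c d (t, s) ->
     deriv_within a b (fun u => f u s) t (D1f t s)) ->
  (forall t s, in_rect a b c d (t, s) ->
     deriv_within c d (fun v => f t v) s (D2f t s)) ->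
  (forall t s, in_rect a b c d (t, s) ->
     deriv_within c d (fun v => D1f t v) s (D21f t s)) ->
  cont_on_rect a b c d D1f ->
  cont_on_rect a b c d D2f ->
  cont_on_rect a b c d D21f ->
  RInt (fun t => RInt (fun s => f t s) c d) a b
  - / 2 * ((d - c) * RInt (fun t => f t c + f t d) a b
           + (b - a) * RInt (fun s => f a s + f b s) c d)
  + / 4 * (b - a) * (d - c) * (f a c + f a d + f b c + f b d)
  <= / 4 * (b - a) * (d - c)
       * RInt (fun t => RInt (fun s => Rabs (D21f t s)) c d) a b.
Proof.
  intros Hab Hcd Hf H1 H2 H21 HD1 HD2 HD21.
  assert (UF := UC_of_cont a b c d f ltac:(lra) ltac:(lra) Hf).
  assert (UD1 := UC_of_cont a b c d D1f ltac:(lra) ltac:(lra) HD1).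
  assert (UD21 := UC_of_cont a b c d D21f ltac:(lra) ltac:(lra) HD21).
  set (m1 := (a + b) / 2). set (m2 := (c + d) / 2).
  set (G := fun t => RInt (fun s => f t s) c d).
  set (CF := fun t => RInt (fun s => (s - m2) * D21f t s) c d).
  set (J := fun t => RInt (fun s => Rabs (D21f t s)) c d).
  assert (HCF : forall t, a <= t <= b ->
     CF t = (d - c) / 2 * (D1f t c + D1f t d) - RInt (fun s => D1f t s) c d).
  { intros t Ht. unfold CF, m2.
    apply (is_RInt_unique _ _ _ _ (trap c d (D1f t) (D21f t) Hcd
       (UC_sec_s a b c d D1f t ltac:(lra) UD1 Ht)
       (UC_sec_s a b c d D21f t ltac:(lra) UD21 Ht)
       (fun x Hx => dw_derive c d _ x _ Hx (H21 t x ltac:(split; simpl; lra))))). }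
  set (A := fun t => G t - (d - c) / 2 * (f t c + f t d)).
  assert (CG : C1 a b G) by (apply UC_param; auto; lra).
  assert (Cfc : C1 a b (fun t => f t c + f t d)).
  { apply C1_plus; apply (UC_sec_t a b c d f); auto; lra. }
  assert (CA : C1 a b A) by (apply C1_minus; auto; apply C1_mult; auto; apply C1_const).
  assert (CCF : C1 a b (fun t => - CF t)).
  { apply C1_ext with (fun t => - ((d - c) / 2 * (D1f t c + D1f t d) - RInt (fun s => D1f t s) c d)).
    lra. intros x Hx; rewrite HCF; auto.
    apply C1_opp, C1_minus. apply C1_mult. apply C1_const.
    apply C1_plus; apply (UC_sec_t a b c d D1f); auto; lra.
    apply UC_param; auto; lra. }
  assert (DA : forall t, a < t < b -> is_derive A t (- CF t)).
  { intros t Ht. apply is_derive_Reals. rewrite HCF by lra.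
    replace (- ((d - c) / 2 * (D1f t c + D1f t d) - RInt (fun s => D1f t s) c d)) with
      (RInt (fun s => D1f t s) c d - (d - c) / 2 * (D1f t c + D1f t d)) by ring.
    apply (derivable_pt_lim_minus G (fun t => (d - c) / 2 * (f t c + f t d))).
    apply is_derive_Reals. apply (deriv_param a b c d f D1f); auto.
    apply (derivable_pt_lim_scal (fun t => f t c + f t d)).
    apply (derivable_pt_lim_plus (fun t => f t c) (fun t => f t d)).
    apply is_derive_Reals. apply (dw_derive a b); auto. apply H1; split; simpl; lra.
    apply is_derive_Reals. apply (dw_derive a b); auto. apply H1; split; simpl; lra. }
  assert (T := trap a b A (fun t => - CF t) Hab CA CCF DA).
  assert (ExG : ex_RInt G a b) by (apply C1_ex_RInt; auto; lra).
  assert (Exfc : ex_RInt (fun t => f t c + f t d) a b) by (apply C1_ex_RInt; auto; lra).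
  assert (RA : RInt A a b = RInt G a b - (d - c) / 2 * RInt (fun t => f t c + f t d) a b).
  { unfold A. rewrite (RInt_sub2 G (fun t => (d - c) / 2 * (f t c + f t d))); auto.
    rewrite (RInt_cmul ((d - c) / 2) (fun t => f t c + f t d)); auto.
    apply C1_ex_RInt. lra. apply C1_mult; auto. apply C1_const. }
  assert (RG : RInt (fun s => f a s + f b s) c d = G a + G b).
  { unfold G. apply RInt_add2; apply C1_ex_RInt; try lra; apply (UC_sec_s a b); auto; lra. }
  assert (V := is_RInt_unique _ _ _ _ T).
  apply Rle_trans with (- ((b - a) / 2 * (A a + A b) - RInt A a b)).
  { right. rewrite RA. unfold A. rewrite RG. field. }
  rewrite <- V.
  assert (Cphi : C1 a b (fun x => (x - (a + b) / 2) * - CF x)).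
  { apply C1_mult; auto. apply C1_minus. apply C1_id; lra. apply C1_const. }
  assert (CJ : C1 a b J) by (apply UC_param; [lra | lra | apply UC_abs; auto]).
  eapply Rle_trans. apply Rabs_maj2.
  eapply Rle_trans. apply abs_RInt_le. lra. apply C1_ex_RInt; auto; lra.
  apply Rle_trans with (RInt (fun t => (b - a) / 2 * ((d - c) / 2 * J t)) a b).
  { apply RInt_le. lra.
    apply C1_ex_RInt. lra. apply C1_abs; auto.
    apply C1_ex_RInt. lra. apply C1_mult. apply C1_const. apply C1_mult; auto. apply C1_const.
    intros t Ht.
    rewrite Rabs_mult, Rabs_Ropp. apply Rmult_le_compat. apply Rabs_pos. apply Rabs_pos.
    unfold Rabs; destruct Rcase_abs; lra.
    unfold CF, J.
    assert (Cq : C1 c d (fun s => (s - m2) * D21f t s)).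
    { apply C1_mult. apply C1_minus. apply C1_id; lra. apply C1_const.
      apply (UC_sec_s a b c d D21f t); auto; lra. }
    assert (Ca : C1 c d (fun s => Rabs (D21f t s))).
    { apply C1_abs. apply (UC_sec_s a b c d D21f t); auto; lra. }
    eapply Rle_trans. apply abs_RInt_le. lra. apply C1_ex_RInt; auto; lra.
    rewrite <- (RInt_cmul ((d - c) / 2) (fun s => Rabs (D21f t s))) by (apply C1_ex_RInt; auto; lra).
    apply RInt_le. lra.
    apply C1_ex_RInt. lra. apply C1_abs; auto.
    apply C1_ex_RInt. lra. apply C1_mult; auto. apply C1_const.
    intros s Hs. rewrite Rabs_mult. apply Rmult_le_compat_r. apply Rabs_pos.
    unfold m2, Rabs; destruct Rcase_abs; lra. }
  right.
  rewrite (RInt_cmul ((b - a) / 2) (fun t => (d - c) / 2 * J t)).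
  rewrite (RInt_cmul ((d - c) / 2) J). field.
  apply C1_ex_RInt; auto; lra.
  apply C1_ex_RInt. lra. apply C1_mult; auto. apply C1_const.
Qed.
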